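(* For every positive integer $n$, $w_n(x)=s_n(x)$ as polynomials, where $$w_n(x)=\sum_{k=1}^n w(n,k)x^{k-1},\qquad s_n(x)=\sum_{k=1}^nN(n,k)x^{k-1}(x+1)^{n-k}.$$
   Context: For $n\ge k\ge1$, $N(n,k)=\frac1n\binom{n}{k}\binom{n}{k-1}$ (Narayana number) and $w(n,k)=\frac1k\binom{n-1}{k-1}\binom{n+k}{k-1}$. *)

(* Defs.v *)
From mathcomp Require Import all_boot all_order all_algebra.
Set Implicit Arguments. Unset Strict Implicit. Unset Printing Implicit Defensive.
Import GRing.Theory Num.Theory.
Local Open Scope ring_scope.

Definition narayana (n k : nat) : rat :=
  (n%:R)^-1 * ('C(n, k))%:R * ('C(n, k.-1))%:R.

Definition wnum (n k : nat) : rat :=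
  (k%:R)^-1 * ('C(n.-1, k.-1))%:R * ('C(n + k, k.-1))%:R.

Definition wpoly (n : nat) : {poly rat} :=
  \sum_(1 <= k < n.+1) (wnum n k)%:P * 'X^(k.-1).

Definition spoly (n : nat) : {poly rat} :=
  \sum_(1 <= k < n.+1) (narayana n k)%:P * 'X^(k.-1) * ('X + 1) ^+ (n - k).

(* Main.v *)
Require Import Defs.
From mathcomp Require Import all_boot all_order all_algebra.
From mathcomp Require Import ring zify.
Import GRing.Theory Num.Theory.

Lemma trin n m k : (k <= m)%N -> (m <= n)%N ->
  ('C(n,k) * 'C(n-k,m-k) = 'C(n,m) * 'C(m,k))%N.
Proof.
move=> km mn.
have kn : (k <= n)%N by apply: leq_trans km mn.
have h1 := bin_fact kn.
have h2' : (m - k <= n - k)%N by lia.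
have h2 := bin_fact h2'.
have e : (n - k - (m - k) = n - m)%N by lia.
rewrite e in h2.
have h3 := bin_fact km. have h4 := bin_fact mn.
apply/eqP; rewrite -(eqn_pmul2r (_ : 0 < k`! * (m-k)`! * (n-m)`!)%N); last first.
  by rewrite !muln_gt0 !fact_gt0.
apply/eqP.
transitivity ('C(n,k) * (k`! * ('C(n-k,m-k) * ((m-k)`! * (n-m)`!))))%N; first ring.
rewrite h2 h1.
transitivity ('C(n,m) * (('C(m,k) * (k`! * (m-k)`!)) * (n-m)`!))%N; last ring.
by rewrite h3 h4.
Qed.

Lemma coefX1 p i : ((('X + 1) ^+ p : {poly rat})`_i = ('C(p,i))%:R)%R.
Proof.
elim: p i => [|p IH] i.
  by rewrite expr0 coef1; case: i.
rewrite exprSr mulrDr mulr1 coefD coefMX IH.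
case: i => [|i] /=; first by rewrite IH !bin0 add0r.
rewrite IH.
by rewrite binS natrD addrC.
Qed.

Lemma lemma4p5 (n : nat) : (0 < n)%N -> wpoly n = spoly n.
Proof.
move=> n0; apply/polyP => j.
rewrite /wpoly /spoly !coef_sum.
under eq_bigr do rewrite coefCM coefXn.
under [in RHS]eq_bigr do rewrite -mulrA coefCM coefXnM coefX1.
rewrite !big_add1 /= !big_mkord.
case: (ltnP j n) => jn; last first.
  rewrite big1; last by move=> i _; case: eqP => [e|]; [have := ltn_ord i; lia | rewrite mulr0].
  rewrite big1 // => i _; have := ltn_ord i => lti.
  rewrite ifN; last lia.
  by rewrite bin_small ?mulr0 //; lia.
rewrite (bigD1 (Ordinal jn)) //= eqxx mulr1 big1 ?addr0; last first.
  move=> i /eqP ne; case: eqP => [e|]; last by rewrite mulr0.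
  by exfalso; apply: ne; apply: val_inj.
rewrite -(big_mkord xpredT (fun i : nat => (narayana n i.+1 * (if (j < i)%N then 0 else ('C(n - i.+1, j - i))%:R))%R)).
rewrite (big_cat_nat (leq0n j.+1) jn) /= [X in (_ + X)%R]big1_seq ?addr0; last first.
  by move=> i /andP[_]; rewrite mem_index_iota => /andP[ji _]; rewrite ifT ?mulr0.
rewrite big_mkord.
transitivity ((n%:R^-1 * ('C(n, j.+1))%:R) * \sum_(i < j.+1) (('C(n,i) * 'C(j.+1, j - i))%N)%:R : rat)%R; last first.
  rewrite big_distrr /=; apply: eq_bigr => i _.
  have lij := ltn_ord i.
  rewrite ifN; last lia.
  rewrite /narayana /= -!mulrA; congr (_ * _)%R.
  rewrite -!natrM; congr (_%:R)%R; rewrite mulnCA [RHS]mulnCA; congr (_ * _)%N.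
  have := trin n (j.+1) (i.+1) lij jn; rewrite !subSS => ->.
  by rewrite (_ : j - i = j.+1 - i.+1)%N ?bin_sub.
rewrite -natr_sum binomial.Vandermonde /wnum /=; congr (_ * _)%R.
have nz : (n%:R : rat) != 0%R by rewrite pnatr_eq0 -lt0n.
have nz' : ((j.+1)%:R : rat) != 0%R by rewrite pnatr_eq0.
transitivity (((j.+1)%:R^-1 * n%:R^-1 * (n * 'C(n.-1, j))%N%:R) : rat)%R.
  rewrite natrM; field; by rewrite nz /= addrC natr1.
by rewrite (mul_bin_diag n j) natrM; field; rewrite nz /= addrC natr1.
Qed.
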